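(* Let $n$ be a nonnegative integer, let $f_n(z),g_n(z)\in\mathbb{C}[z]$ be polynomials of length $\ell$ (i.e., of degree $\ell-1$), let $\sigma_n,\tau_n\in\{-1,1\}$, and let $f_{n+1}(z)=f_n(z)+\sigma_n z^\ell f_n^\dagger(-z)$ and $g_{n+1}(z)=g_n(z)+\tau_n z^\ell g_n^\dagger(-z)$. Then $\|f_{n+1}\|_2^2=2\|f_n\|_2^2$ and $\|g_{n+1}\|_2^2=2\|g_n\|_2^2$. Moreover, if for $j\in\{n,n+1\}$ we set \[ u_j=\|f_jg_j\|_2^2,\qquad v_j=\|f_j\widetilde{g}_j\|_2^2,\qquad w_j=\operatorname{Re}\int f_j\widetilde{f}_j\overline{g_j\widetilde{g}_j}, \] then \begin{enumerate} \item $u_{n+1}=2u_n+2v_n+2\sigma_n\tau_n w_n$, \item $v_{n+1}=2u_n+2v_n-2\sigma_n\tau_n w_n$, \item $w_{n+1}=2\sigma_n\tau_n u_n-2\sigma_n\tau_n v_n+2w_n$. \end{enumerate}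
   Context: For a polynomial $a(z)=a_0+\cdots+a_dz^d$ of degree $d$, its length is $1+d$ and $a^\dagger(z)=\overline{a_d}+\overline{a_{d-1}}z+\cdots+\overline{a_0}z^d$; $f_n^\dagger(-z)$ means $f_n^\dagger$ evaluated at $-z$. For a Laurent polynomial $a(z)=\sum_ja_jz^j$: $\widetilde{a}(z)=a(-z)$, $\overline{a(z)}=\sum_j\overline{a_j}z^{-j}$, $\int a$ is the constant coefficient $a_0$ (equivalently $\frac{1}{2\pi}\int_0^{2\pi}a(e^{i\theta})d\theta$), and $\|a\|_p=\left(\frac{1}{2\pi}\int_0^{2\pi}|a(e^{i\theta})|^pd\theta\right)^{1/p}$. *)

(* Defs.v *)
From HB Require Import structures.
From mathcomp Require Import all_boot all_order all_algebra.
Set Implicit Arguments. Unset Strict Implicit. Unset Printing Implicit Defensive.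
Import Order.TTheory GRing.Theory Num.Theory.
Local Open Scope ring_scope.

Section Defs.
Variable C : numClosedFieldType.

Definition pdagger (a : {poly C}) : {poly C} :=
  \poly_(i < size a) (a`_(size a - 1 - i))^*.

Definition pneg (a : {poly C}) : {poly C} := a \Po (- 'X).

(* Laurent polynomials: Laurent P k represents z^k * P(z), k : int. *)
Record laurent := Laurent { lpoly : {poly C}; lshift : int }.

Definition lofpoly (p : {poly C}) : laurent := Laurent p 0.
Definition lmul (a b : laurent) : laurent :=
  Laurent (lpoly a * lpoly b) (lshift a + lshift b).
(* conj(z^k P(z)) = sum_j conj(P_j) z^{-k-j} = z^{-k-d} P^dagger(z), d = deg P *)
Definition lconj (a : laurent) : laurent :=
  Laurent (pdagger (lpoly a)) (- lshift a - ((size (lpoly a)).-1)%:Z).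
(* tilde a (z) = a(-z) = (-1)^k z^k P(-z) *)
Definition ltilde (a : laurent) : laurent :=
  Laurent ((-1 : C) ^ lshift a *: pneg (lpoly a)) (lshift a).
(* integral = constant coefficient *)
Definition lint (a : laurent) : C :=
  if (lshift a <= 0)%R then (lpoly a)`_(`|lshift a|%N) else 0.

(* ||a||_2^2 = (1/2pi) int |a|^2 = int (a * conj a) *)
Definition l2sq (a : laurent) : C := 'Re (lint (lmul a (lconj a))).

Definition ucoef (f g : {poly C}) : C := l2sq (lmul (lofpoly f) (lofpoly g)).
Definition vcoef (f g : {poly C}) : C :=
  l2sq (lmul (lofpoly f) (ltilde (lofpoly g))).
Definition wcoef (f g : {poly C}) : C :=
  'Re (lint (lmul (lmul (lofpoly f) (ltilde (lofpoly f)))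
                  (lconj (lmul (lofpoly g) (ltilde (lofpoly g)))))).

Definition step (l : nat) (s : C) (f : {poly C}) : {poly C} :=
  f + s *: ('X^l * pneg (pdagger f)).
End Defs.

(* Main.v *)
Require Import Defs.
From HB Require Import structures.
From mathcomp Require Import all_boot all_order all_algebra.
From mathcomp Require Import zify ring.
Import Order.TTheory GRing.Theory Num.Theory.
Local Open Scope ring_scope.
Set Implicit Arguments. Unset Strict Implicit. Unset Printing Implicit Defensive.

Section Aux.
Variable C : numClosedFieldType.
Implicit Types p q : {poly C}.

Definition rv (N : nat) p : {poly C} := \poly_(i < N.+1) (p`_(N - i))^*.

Lemma coef_rv N p k : (rv N p)`_k = if (k <= N)%N then (p`_(N - k))^* else 0.
Proof. by rewrite coef_poly ltnS. Qed.

Lemma size_rv N p : (size (rv N p) <= N.+1)%N.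
Proof. exact: size_poly. Qed.

Lemma coef_pneg p i : (pneg p)`_i = (-1)^+i * p`_i.
Proof.
elim/poly_ind: p i => [|p c IH] i; first by rewrite /pneg comp_poly0 !coef0 mulr0.
rewrite /pneg comp_poly_MXaddC -/(pneg p) mulrN !coefD !coefC coefN !coefMX.
case: i => [|i] /=; first by rewrite oppr0 add0r expr0 mul1r.
by rewrite IH !addr0 exprS mulN1r mulNr.
Qed.

Lemma size_pneg p : size (pneg p) = size p.
Proof. by rewrite /pneg size_comp_poly2 // size_polyN size_polyX. Qed.

Lemma sign_sq (k : nat) : (-1) ^+ k * (-1) ^+ k = 1 :> C.
Proof. by rewrite -exprD -signr_odd oddD addbb. Qed.

Lemma pnegK p : pneg (pneg p) = p.
Proof. by apply/polyP => i; rewrite !coef_pneg mulrA sign_sq mul1r. Qed.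

Lemma pnegD p q : pneg (p + q) = pneg p + pneg q.
Proof. exact: comp_polyD. Qed.
Lemma pnegM p q : pneg (p * q) = pneg p * pneg q.
Proof. exact: comp_polyM. Qed.
Lemma pnegN p : pneg (- p) = - pneg p.
Proof. by apply/polyP => i; rewrite !(coef_pneg, coefN) mulrN. Qed.
Lemma pnegCM c p : pneg (c%:P * p) = c%:P * pneg p.
Proof. by apply/polyP => i; rewrite !(coef_pneg, coefCM) mulrCA. Qed.
Lemma pnegXn n : pneg ('X^n : {poly C}) = ((-1)^+n)%:P * 'X^n.
Proof.
apply/polyP => i; rewrite coef_pneg coefCM !coefXn.
by case: eqP => [->|]; rewrite ?mulr1 ?mulr0.
Qed.

Lemma ct_even p N : ~~ odd N -> (pneg p)`_N = p`_N.
Proof. by move=> h; rewrite coef_pneg -signr_odd (negbTE h) expr0 mul1r. Qed.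

Lemma ct_odd0 p N : ~~ odd N -> pneg p = - p -> p`_N = 0.
Proof.
move=> h e; have := @ct_even p N h; rewrite e coefN => /eqP.
rewrite eq_sym -subr_eq0 opprK -mulr2n mulrn_eq0 /= => /eqP //.
Qed.

Lemma ct_small p N : (size p <= N)%N -> p`_N = 0.
Proof. exact: nth_default. Qed.

Lemma rvD N p q : rv N (p + q) = rv N p + rv N q.
Proof.
apply/polyP => k; rewrite coefD !coef_rv coefD rmorphD.
by case: ifP; rewrite ?addr0.
Qed.
Lemma rvN N p : rv N (- p) = - rv N p.
Proof.
apply/polyP => k; rewrite coefN !coef_rv coefN rmorphN.
by case: ifP; rewrite ?oppr0.
Qed.
Lemma rvCM N c p : rv N (c%:P * p) = (c^*)%:P * rv N p.
Proof.
apply/polyP => k; rewrite coefCM !coef_rv coefCM rmorphM.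
by case: ifP; rewrite ?mulr0.
Qed.
Ltac ifs := repeat (first [case: ifP => [?|/negbT ?] | case: eqP => ?]).
Ltac leaf := first [ (exfalso; lia) | by rewrite /= ?rmorph0 ?rmorph1 ?conjCK | (congr (_ ^*); congr (_`_ _); lia)
  | (congr (_`_ _); lia) ].

Lemma rvMX N p : rv N.+1 (p * 'X) = rv N p.
Proof.
apply/polyP => k; rewrite !coef_rv coefMX; ifs; leaf.
Qed.
Lemma rv_shift N M q : (size q <= M.+1)%N -> rv (N + M) q = 'X^N * rv M q.
Proof.
move=> hq; apply/polyP => k; rewrite coefXnM !coef_rv; ifs; try leaf.
by rewrite ct_small ?rmorph0 //; lia.
Qed.
Lemma rv1 N : rv N (1 : {poly C}) = 'X^N.
Proof.
apply/polyP => k; rewrite coef_rv coefXn coef1; ifs; try leaf.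
Qed.
Lemma rvC N c : rv N c%:P = (c^*)%:P * 'X^N.
Proof. by rewrite -[c%:P]mulr1 rvCM rv1. Qed.
Lemma rvXn k : rv k ('X^k : {poly C}) = 1.
Proof.
apply/polyP => i; rewrite coef_rv coefXn coef1; ifs; try leaf.
Qed.

Lemma rv0 N : rv N (0 : {poly C}) = 0.
Proof. by apply/polyP => k; rewrite coef_rv !coef0 rmorph0 if_same. Qed.

Lemma rvM N M p q : (size p <= N.+1)%N -> (size q <= M.+1)%N ->
  rv (N + M) (p * q) = rv N p * rv M q.
Proof.
move=> + hq; elim/poly_ind: p N => [|p c IH] N hp.
  by rewrite mul0r !rv0 mul0r.
rewrite size_MXaddC in hp.
case: N hp => [|N] hp.
  have p0 : p = 0.
    by case: (p =P 0) hp => // /eqP; rewrite -size_poly_eq0; case: (c == 0); rewrite ?andbF /=; lia.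
  by rewrite p0 mul0r add0r add0n rvC expr0 mulr1 rvCM.
have hp' : (size p <= N.+1)%N.
  by move: hp; case: ifP => [/andP[/eqP-> _]|_]; [rewrite size_poly0 | lia].
rewrite mulrDl rvD rvD.
rewrite -mulrA [('X * q)]mulrC mulrA addSn rvMX IH //.
rewrite rvMX rvCM rvC -addSn rv_shift //; ring.
Qed.

Lemma rvXM N k p : (size p <= N.+1)%N -> rv (N + k) ('X^k * p) = rv N p.
Proof.
by move=> hp; rewrite mulrC rvM ?rvXn ?mulr1 // size_polyXn.
Qed.

Lemma rv_inv N p : (size p <= N.+1)%N -> rv N (rv N p) = p.
Proof.
move=> hp; apply/polyP => k; rewrite !coef_rv.
case: ifP => h; last by rewrite ct_small //; lia.
have -> : (N - k <= N)%N by lia.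
by rewrite conjCK; congr (p`_ _); lia.
Qed.

Lemma rv_pneg N p : rv N (pneg p) = ((-1)^+N)%:P * pneg (rv N p).
Proof.
apply/polyP => k; rewrite coefCM coef_pneg !coef_rv coef_pneg.
case: ifP => h; last by rewrite !mulr0.
rewrite rmorphM rmorph_sign mulrA; congr (_ * _).
have -> : N = ((N - k) + k)%N by lia.
by rewrite addnK exprD -mulrA sign_sq mulr1.
Qed.

Lemma refl_ct M N a b p : (size p <= M.+1)%N -> (a + b + M = N + N)%N ->
  (('X^a * p)`_N)^* = ('X^b * rv M p)`_N.
Proof.
move=> hp hab; rewrite !coefXnM coef_rv.
case: (ltnP N a) => h1.
  have -> : (N < b)%N = false by lia.
  by rewrite rmorph0; have -> : (N - b <= M)%N = false by lia.
case: (ltnP N b) => h2.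
  by rewrite ct_small ?rmorph0 //; lia.
have -> : (N - b <= M)%N by lia.
by congr (_ ^*); congr (p`_ _); lia.
Qed.

Definition ip N p q := \sum_(i < N.+1) p`_i * (q`_i)^*.

Lemma ipE N p q : (p * rv N q)`_N = ip N p q.
Proof.
rewrite coefM /ip; apply: eq_bigr => [[j hj]] _ /=.
rewrite coef_rv leq_subr subKn //; lia.
Qed.

Lemma ip_size N p q : (size q <= N.+1)%N ->
  ip N p q = \sum_(i < size q) p`_i * (q`_i)^*.
Proof.
move=> hq; rewrite /ip (big_ord_widen N.+1 (fun i => p`_i * (q`_i)^*) hq).
rewrite [RHS]big_mkcond; apply: eq_bigr => [[i hi]] _ /=.
by case: ifP => // /negbT h; rewrite (@ct_small q i) ?rmorph0 ?mulr0 // leqNgt.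
Qed.

Lemma ip_conj N p q : (ip N p q)^* = ip N q p.
Proof.
rewrite /ip rmorph_sum; apply: eq_bigr => i _.
by rewrite rmorphM /= conjCK mulrC.
Qed.

Lemma pdaggerE p : pdagger p = rv (size p).-1 p.
Proof.
apply/polyP => k; rewrite /pdagger coef_poly coef_rv.
case E: (size p) => [|n] /=.
  move/eqP: E; rewrite size_poly_eq0 => /eqP ->.
  by rewrite coef0 rmorph0 if_same.
rewrite ltnS; case: ifP => // h; congr (_ ^*); congr (p`_ _); lia.
Qed.

Lemma lint_ip p q :
  lint (lmul (lofpoly p) (lconj (lofpoly q))) = \sum_(i < size q) p`_i * (q`_i)^*.
Proof.
rewrite /lint /lmul /lconj /lofpoly /=.
rewrite oppr0 sub0r add0r oppr_le0.
rewrite lez_nat /= abszN absz_nat.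
rewrite pdaggerE ipE ip_size //; lia.
Qed.

End Aux.

Section Ident.
Variable C : numClosedFieldType.
Implicit Types f g r q Y : {poly C}.

Ltac pm x := let H := fresh in case: x => H; subst; rewrite ?polyCN ?polyC1.

Lemma ident_u (f f' r r' g g' q q' Y : {poly C}) (s t e : C) :
  (s = 1 \/ s = -1) -> (t = 1 \/ t = -1) -> (e = 1 \/ e = -1) ->
  (f + s%:P * (Y * r')) * (g + t%:P * (Y * q')) *
  ((Y * r + s%:P * (e%:P * f')) * (Y * q + t%:P * (e%:P * g'))) =
  Y^+2 * ((f*g)*(r*q) + (f*g')*(r*(e%:P*q')) + (f'*g)*((e%:P*r')*q) + (f'*g')*(r'*q'))
  + (s%:P*(Y*((e%:P*(f*f') + Y^+2*(r*r'))*(g*q + e%:P*(g'*q')))) + t%:P*(Y*((f*r + e%:P*(f'*r'))*(e%:P*(g*g') + Y^+2*(q*q')))))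
  + s%:P * t%:P * (f*f'*(g*g') + Y^+2*((f*f')*(q*(e%:P*q'))) + Y^+2*((g*g')*(r*(e%:P*r'))) + Y^+4*(r*r'*(q*q'))).
Proof. move=> hs ht he; pm hs; pm ht; pm he; ring. Qed.

Lemma ident_w (f f' r r' g g' q q' Y : {poly C}) (s t e : C) :
  (s = 1 \/ s = -1) -> (t = 1 \/ t = -1) -> (e = 1 \/ e = -1) ->
  (f + s%:P * (Y * r')) * (f' - s%:P * (e%:P * (Y * r))) *
  ((Y * q + t%:P * (e%:P * g')) * (e%:P * (Y * q') - t%:P * (e%:P * g))) =
  (Y^+2*((f*f')*(q*(e%:P*q'))) + Y^+2*((g*g')*(r*(e%:P*r'))) - f*f'*(g*g') - Y^+4*(r*r'*(q*q')))
  + s%:P * (Y^+3 * ((r'*f' - e%:P*(f*r)) * (q*(e%:P*q'))) - Y*((r'*f' - e%:P*(f*r))*(g*g')))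
  + t%:P * (Y * ((g'*q' - e%:P*(q*g))*(f*f')) - Y^+3*((g'*q' - e%:P*(q*g))*(r*(e%:P*r'))))
  + s%:P * t%:P * (Y^+2 * ((f*g)*(r*q) - (f*g')*(r*(e%:P*q')) - (f'*g)*((e%:P*r')*q) + (f'*g')*(r'*q'))).
Proof. move=> hs ht he; pm hs; pm ht; pm he; ring. Qed.

Lemma ident_n (f f' r r' Y : {poly C}) (s e : C) :
  (s = 1 \/ s = -1) -> (e = 1 \/ e = -1) ->
  (f + s%:P * (Y * r')) * (Y * r + s%:P * (e%:P * f')) =
  Y * (f*r) + Y * (e%:P * (f'*r')) + s%:P * (e%:P*(f*f') + Y^+2*(r*r')).
Proof. move=> hs he; pm hs; pm he; ring. Qed.
End Ident.

Section Conv.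
Variable C : numClosedFieldType.
Implicit Types p q f g : {poly C}.

Lemma lmul_of p q : lmul (lofpoly p) (lofpoly q) = lofpoly (p * q).
Proof. by rewrite /lmul /lofpoly /= addr0. Qed.

Lemma ltilde_of p : ltilde (lofpoly p) = lofpoly (pneg p).
Proof. by rewrite /ltilde /lofpoly /= expr0z scale1r. Qed.

Lemma l2sqE N p : (size p <= N.+1)%N -> l2sq (lofpoly p) = 'Re (ip N p p).
Proof. by move=> h; rewrite /l2sq lint_ip ip_size. Qed.

Lemma ucoefE N f g : (size (f * g)%R <= N.+1)%N -> ucoef f g = 'Re (ip N (f*g) (f*g)).
Proof. by move=> h; rewrite /ucoef lmul_of (l2sqE h). Qed.

Lemma vcoefE N f g : (size (f * pneg g)%R <= N.+1)%N ->
  vcoef f g = 'Re (ip N (f * pneg g) (f * pneg g)).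
Proof. by move=> h; rewrite /vcoef ltilde_of lmul_of (l2sqE h). Qed.

Lemma wcoefE N f g : (size (g * pneg g)%R <= N.+1)%N ->
  wcoef f g = 'Re (ip N (f * pneg f) (g * pneg g)).
Proof. by move=> h; rewrite /wcoef !ltilde_of !lmul_of lint_ip ip_size. Qed.

Lemma sizeM a b p q : (size p <= a.+1)%N -> (size q <= b.+1)%N -> (size (p * q)%R <= (a + b).+1)%N.
Proof. move=> hp hq; have := size_mul_leq p q; lia. Qed.
Lemma sizeD n p q : (size p <= n)%N -> (size q <= n)%N -> (size (p + q)%R <= n)%N.
Proof. move=> hp hq; have := size_add p q; lia. Qed.
Lemma sizeB n p q : (size p <= n)%N -> (size q <= n)%N -> (size (p - q)%R <= n)%N.
Proof. by move=> hp hq; apply: sizeD; rewrite ?size_opp. Qed.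
Lemma sizeCM n c p : (size p <= n)%N -> (size (c%:P * p)%R <= n)%N.
Proof. by rewrite mul_polyC => h; apply: leq_trans (size_scale_leq _ _) h. Qed.
Lemma sizeXn n : (size ('X^n : {poly C}) <= n.+1)%N.
Proof. by rewrite size_polyXn. Qed.
Lemma sizeN' n p : (size p <= n)%N -> (size (pneg p) <= n)%N.
Proof. by rewrite size_pneg. Qed.
Lemma sizeW m n p : (size p <= m)%N -> (m <= n)%N -> (size p <= n)%N.
Proof. lia. Qed.

Lemma ctX a M N p : (a + M = N)%N -> ('X^a * p)`_N = p`_M.
Proof. by move=> <-; rewrite coefXnM ltnNge leq_addr /= addKn. Qed.
Lemma ctX0 a N p : (N < a)%N -> ('X^a * p)`_N = 0.
Proof. by move=> h; rewrite coefXnM h. Qed.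
Lemma ctXk a k M N p : (a * k + M = N)%N -> (('X^a)^+k * p)`_N = p`_M.
Proof. by rewrite -exprM; apply: ctX. Qed.
Lemma ctXk0 a k N p : (N < a * k)%N -> (('X^a)^+k * p)`_N = 0.
Proof. by rewrite -exprM; apply: ctX0. Qed.

Lemma pnegX p n : pneg (p ^+ n) = (pneg p) ^+ n.
Proof. by elim: n => [|n IH]; rewrite ?expr0 ?exprS ?pnegM ?IH // /pneg comp_polyC. Qed.

Lemma ReD (x y : C) : 'Re (x + y) = 'Re x + 'Re y.
Proof. by rewrite !ReE rmorphD -mulrDl; congr (_ / _); ring. Qed.
End Conv.

Section Main.
Variable C : numClosedFieldType.
Implicit Types p q f g : {poly C}.

Lemma e_sign d : exists2 e : C, (e = 1 \/ e = -1) & (-1)^+d = e.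
Proof.
exists ((-1)^+d) => //; rewrite -signr_odd; case: (odd d); [right; rewrite expr1 | left; rewrite expr0] => //.
Qed.

Lemma sign_conj (s : C) : (s = 1 \/ s = -1) -> s^* = s.
Proof. by case=> ->; rewrite ?rmorphN rmorph1. Qed.

Lemma stepE d s f : size f = d.+1 -> step d.+1 s f = f + s%:P * ('X^(d.+1) * pneg (rv d f)).
Proof. by move=> Hf; rewrite /step pdaggerE Hf mul_polyC. Qed.

Lemma rv_step d s p : (size p <= d.+1)%N -> s^* = s ->
  rv (d+d).+1 (p + s%:P * ('X^(d.+1) * pneg (rv d p))) =
  'X^(d.+1) * rv d p + s%:P * (((-1)^+d)%:P * pneg p).
Proof.
move=> hp cs; rewrite rvD rvCM cs; congr (_ + _ * _).
  have -> : (d+d).+1 = (d.+1 + d)%N by lia.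
  by rewrite rv_shift.
have -> : (d+d).+1 = (d + d.+1)%N by lia.
by rewrite rvXM ?sizeN' ?size_rv // rv_pneg rv_inv.
Qed.

Lemma pnegC (c : C) : pneg c%:P = c%:P.
Proof. exact: comp_polyC. Qed.

Lemma pnegY d (e : C) : (-1)^+d = e -> pneg ('X^(d.+1) : {poly C}) = - (e%:P * 'X^(d.+1)).
Proof. by move=> he; rewrite pnegXn exprS he polyCM polyCN polyC1 mulN1r mulNr. Qed.

Lemma rv_neg_e d (e : C) p : (-1)^+d = e -> rv d (pneg p) = e%:P * pneg (rv d p).
Proof. by move=> <-; rewrite rv_pneg. Qed.

Lemma u_step d f g s t : size f = d.+1 -> size g = d.+1 ->
  (s = 1 \/ s = -1) -> (t = 1 \/ t = -1) ->
  ucoef (step d.+1 s f) (step d.+1 t g) =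
  2 * ucoef f g + 2 * vcoef f g + 2 * s * t * wcoef f g.
Proof.
move=> Hf Hg hs ht.
have cs := sign_conj hs; have ct := sign_conj ht.
have [e he eE] := @e_sign d.
have sf : (size f <= d.+1)%N by rewrite Hf.
have sg : (size g <= d.+1)%N by rewrite Hg.
rewrite !stepE //.
have sF : (size (f + s%:P * ('X^(d.+1) * pneg (rv d f)))%R <= (d+d).+2)%N.
  apply: sizeD; first by apply: sizeW sf _; lia.
  apply: sizeCM; apply: (@sizeW _ ((d.+1 + d).+1)); last lia.
  by apply: sizeM; [apply: sizeXn | apply: sizeN'; apply: size_rv].
have sG : (size (g + t%:P * ('X^(d.+1) * pneg (rv d g)))%R <= (d+d).+2)%N.
  apply: sizeD; first by apply: sizeW sg _; lia.
  apply: sizeCM; apply: (@sizeW _ ((d.+1 + d).+1)); last lia.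
  by apply: sizeM; [apply: sizeXn | apply: sizeN'; apply: size_rv].
rewrite (ucoefE (N := ((d+d).+1 + (d+d).+1)%N)); last exact: sizeM.
rewrite -ipE rvM // !rv_step // eE ident_u //.
rewrite (ucoefE (N := (d+d)%N)); last exact: sizeM.
rewrite (vcoefE (N := (d+d)%N)); last by apply: sizeM; rewrite ?size_pneg.
rewrite (wcoefE (N := (d+d)%N)); last by apply: sizeM; rewrite ?size_pneg.
set Y := ('X^(d.+1) : {poly C}).
set r := rv d f. set q := rv d g.
have sr : (size r <= d.+1)%N by apply: size_rv.
have sq : (size q <= d.+1)%N by apply: size_rv.
have hN : ~~ odd ((d+d).+1 + (d+d).+1)%N by rewrite oddD addbb.
set N4 := ((d+d).+1 + (d+d).+1)%N.
have cY2 : forall P, (Y^+2 * P)`_N4 = P`_(d+d) by move=> P; apply: ctXk; rewrite /N4; lia.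
have cY4 : forall P, (Y^+4 * P)`_N4 = 0 by move=> P; apply: ctXk0; rewrite /N4; lia.
have sgg : (size (g * pneg g)%R <= (d+d).+1)%N by apply: sizeM; rewrite ?size_pneg.
have sff : (size (f * pneg f)%R <= (d+d).+1)%N by apply: sizeM; rewrite ?size_pneg.
have i1 : (f*g*(r*q))`_(d+d) = ip (d+d) (f*g) (f*g) by rewrite -ipE rvM.
have i2 : (f * pneg g * (r * (e%:P * pneg q)))`_(d+d) = ip (d+d) (f * pneg g) (f * pneg g).
  by rewrite -ipE rvM ?size_pneg // (rv_neg_e _ eE).
have i3 : (pneg f * g * (e%:P * pneg r * q))`_(d+d) = ip (d+d) (f * pneg g) (f * pneg g).
  rewrite -i2 -(@ct_even _ (f * pneg g * (r * (e%:P * pneg q)))); last by rewrite oddD addbb.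
  by apply: (congr1 (fun P : {poly C} => P`_(d+d))); rewrite !pnegM !pnegC !pnegK; ring.
have i4 : (pneg f * pneg g * (pneg r * pneg q))`_(d+d) = ip (d+d) (f*g) (f*g).
  rewrite -i1 -(@ct_even _ (f*g*(r*q))); last by rewrite oddD addbb.
  by apply: (congr1 (fun P : {poly C} => P`_(d+d))); rewrite !pnegM.
have i5 : (f * pneg f * (g * pneg g))`_N4 = 0.
  by apply: ct_small; apply: (@sizeW _ ((d+d) + (d+d)).+1); [exact: sizeM | rewrite /N4; lia].
have i6 : (f * pneg f * (q * (e%:P * pneg q)))`_(d+d) = ip (d+d) (f * pneg f) (g * pneg g).
  by rewrite -ipE rvM ?size_pneg // (rv_neg_e _ eE).
have i7 : (g * pneg g * (r * (e%:P * pneg r)))`_(d+d) = (ip (d+d) (f * pneg f) (g * pneg g))^*.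
  by rewrite ip_conj -ipE rvM ?size_pneg // (rv_neg_e _ eE).
have pY := pnegY eE.
have o1 : (Y * ((e%:P * (f * pneg f) + Y ^+ 2 * (r * pneg r)) *
         (g * q + e%:P * (pneg g * pneg q))))`_N4 = 0.
  apply: ct_odd0; first by rewrite oddD addbb.
  rewrite !(pnegM, pnegD, pnegC, pY, pnegX) !pnegK /Y.
  by case: he => ->; rewrite ?polyCN ?polyC1; ring.
have o2 : (Y * ((f * r + e%:P * (pneg f * pneg r)) *
         (e%:P * (g * pneg g) + Y ^+ 2 * (q * pneg q))))`_N4 = 0.
  apply: ct_odd0; first by rewrite oddD addbb.
  rewrite !(pnegM, pnegD, pnegC, pY, pnegX) !pnegK /Y.
  by case: he => ->; rewrite ?polyCN ?polyC1; ring.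
rewrite -polyCM !(coefD, coefCM) !cY2 !cY4 !coefD i1 i2 i3 i4 i5 i6 i7 o1 o2.
rewrite !ReE !(rmorphD, rmorphM) /= !conjCK cs ct rmorph0.
ring.
Qed.

Lemma n_step d f s : size f = d.+1 -> (s = 1 \/ s = -1) ->
  l2sq (lofpoly (step d.+1 s f)) = 2 * l2sq (lofpoly f).
Proof.
move=> Hf hs; have cs := sign_conj hs.
have [e he eE] := @e_sign d.
have sf : (size f <= d.+1)%N by rewrite Hf.
rewrite !stepE //.
have sF : (size (f + s%:P * ('X^(d.+1) * pneg (rv d f)))%R <= (d+d).+2)%N.
  apply: sizeD; first by apply: sizeW sf _; lia.
  apply: sizeCM; apply: (@sizeW _ ((d.+1 + d).+1)); last lia.
  by apply: sizeM; [apply: sizeXn | apply: sizeN'; apply: size_rv].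
rewrite (l2sqE sF) -ipE rv_step // eE ident_n //.
rewrite (l2sqE (N := d)) //.
have sff : (size (f * pneg f)%R <= (d+d).+1)%N by apply: sizeM; rewrite ?size_pneg.
rewrite !(coefD, coefCM) (ctX (M := d)) ?(ctX (M := d)); try lia.
rewrite ctXk0; last lia.
rewrite (@ct_small _ (f * pneg f)) // coefCM -pnegM coef_pneg eE ipE mulr0 addr0 mulr0.
rewrite !ReE !(rmorphD, rmorphM) /=.
by case: he => ->; rewrite ?rmorphN ?rmorph1; ring.
Qed.

Lemma v_step d f g s t : size f = d.+1 -> size g = d.+1 ->
  (s = 1 \/ s = -1) -> (t = 1 \/ t = -1) ->
  vcoef (step d.+1 s f) (step d.+1 t g) =
  2 * ucoef f g + 2 * vcoef f g - 2 * s * t * wcoef f g.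
Proof.
move=> Hf Hg hs ht.
have [e he eE] := @e_sign d.
have vu : forall p q, vcoef p q = ucoef p (pneg q) by move=> p q; rewrite /vcoef /ucoef ltilde_of.
have ww : wcoef f (pneg g) = wcoef f g by rewrite /wcoef !ltilde_of !lmul_of pnegK (mulrC (pneg g) g).
have Hg' : size (pneg g) = d.+1 by rewrite size_pneg.
have ht' : (- t = 1 \/ - t = -1).
  by case: ht => ->; [right | left; rewrite opprK].
rewrite vu.
have -> : pneg (step d.+1 t g) = step d.+1 (- t) (pneg g).
  rewrite !stepE // (rv_neg_e _ eE) !(pnegD, pnegM, pnegC) (pnegY eE) !pnegK.
  by case: he => ->; rewrite ?polyCN ?polyC1; ring.
rewrite u_step // -vu ww (vu f (pneg g)) pnegK; ring.
Qed.

Lemma w_step d f g s t : size f = d.+1 -> size g = d.+1 ->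
  (s = 1 \/ s = -1) -> (t = 1 \/ t = -1) ->
  wcoef (step d.+1 s f) (step d.+1 t g) =
  2 * s * t * ucoef f g - 2 * s * t * vcoef f g + 2 * wcoef f g.
Proof.
move=> Hf Hg hs ht.
have cs := sign_conj hs; have ct := sign_conj ht.
have [e he eE] := @e_sign d.
have ce := sign_conj he.
have sf : (size f <= d.+1)%N by rewrite Hf.
have sg : (size g <= d.+1)%N by rewrite Hg.
have sG : (size (step d.+1 t g) <= (d+d).+2)%N.
  rewrite stepE //; apply: sizeD; first by apply: sizeW sg _; lia.
  apply: sizeCM; apply: (@sizeW _ ((d.+1 + d).+1)); last lia.
  by apply: sizeM; [apply: sizeXn | apply: sizeN'; apply: size_rv].
have pY := pnegY eE.
rewrite (wcoefE (N := ((d+d).+1 + (d+d).+1)%N)); last by apply: sizeM; rewrite ?size_pneg.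
rewrite -ipE rvM ?size_pneg // rv_pneg.
have -> : (-1) ^+ (d + d).+1 = -1 :> C by rewrite -signr_odd /= oddD addbb.
rewrite !stepE // rv_step // eE.
rewrite !(pnegD, pnegM, pnegC, pY, pnegX) !pnegK.
rewrite -/(pneg f) -/(pneg g).
have -> : forall (A B : {poly C}), (A + s%:P * (- (e%:P * 'X^(d.+1)) * B)) = A - s%:P * (e%:P * ('X^(d.+1) * B)).
  by move=> A B; ring.
have -> : forall (A B : {poly C}), (-1)%:P * (- (e%:P * 'X^(d.+1)) * A + t%:P * (e%:P * B))
   = e%:P * ('X^(d.+1) * A) - t%:P * (e%:P * B).
  by move=> A B; rewrite polyCN polyC1; ring.
rewrite ident_w //.
rewrite (ucoefE (N := (d+d)%N)); last exact: sizeM.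
rewrite (vcoefE (N := (d+d)%N)); last by apply: sizeM; rewrite ?size_pneg.
rewrite (wcoefE (N := (d+d)%N)); last by apply: sizeM; rewrite ?size_pneg.
set Y := ('X^(d.+1) : {poly C}).
set r := rv d f. set q := rv d g.
have sr : (size r <= d.+1)%N by apply: size_rv.
have sq : (size q <= d.+1)%N by apply: size_rv.
set N4 := ((d+d).+1 + (d+d).+1)%N.
have cY2 : forall P, (Y^+2 * P)`_N4 = P`_(d+d) by move=> P; apply: ctXk; rewrite /N4; lia.
have cY4 : forall P, (Y^+4 * P)`_N4 = 0 by move=> P; apply: ctXk0; rewrite /N4; lia.
have sgg : (size (g * pneg g)%R <= (d+d).+1)%N by apply: sizeM; rewrite ?size_pneg.
have sff : (size (f * pneg f)%R <= (d+d).+1)%N by apply: sizeM; rewrite ?size_pneg.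
have i1 : (f*g*(r*q))`_(d+d) = ip (d+d) (f*g) (f*g) by rewrite -ipE rvM.
have i2 : (f * pneg g * (r * (e%:P * pneg q)))`_(d+d) = ip (d+d) (f * pneg g) (f * pneg g).
  by rewrite -ipE rvM ?size_pneg // (rv_neg_e _ eE).
have i3 : (pneg f * g * (e%:P * pneg r * q))`_(d+d) = ip (d+d) (f * pneg g) (f * pneg g).
  rewrite -i2 -(@ct_even _ (f * pneg g * (r * (e%:P * pneg q)))); last by rewrite oddD addbb.
  by apply: (congr1 (fun P : {poly C} => P`_(d+d))); rewrite !pnegM !pnegC !pnegK; ring.
have i4 : (pneg f * pneg g * (pneg r * pneg q))`_(d+d) = ip (d+d) (f*g) (f*g).
  rewrite -i1 -(@ct_even _ (f*g*(r*q))); last by rewrite oddD addbb.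
  by apply: (congr1 (fun P : {poly C} => P`_(d+d))); rewrite !pnegM.
have i5 : (f * pneg f * (g * pneg g))`_N4 = 0.
  by apply: ct_small; apply: (@sizeW _ ((d+d) + (d+d)).+1); [exact: sizeM | rewrite /N4; lia].
have i6 : (f * pneg f * (q * (e%:P * pneg q)))`_(d+d) = ip (d+d) (f * pneg f) (g * pneg g).
  by rewrite -ipE rvM ?size_pneg // (rv_neg_e _ eE).
have i7 : (g * pneg g * (r * (e%:P * pneg r)))`_(d+d) = (ip (d+d) (f * pneg f) (g * pneg g))^*.
  by rewrite ip_conj -ipE rvM ?size_pneg // (rv_neg_e _ eE).
have rr : rv d r = f by rewrite rv_inv.
have rq : rv d q = g by rewrite rv_inv.
have sA : (size (pneg r * pneg f - e%:P * (f * r))%R <= (d+d).+1)%N.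
  apply: sizeB; first by apply: sizeM; rewrite ?size_pneg.
  by apply: sizeCM; apply: sizeM.
have sB : (size (pneg g * pneg q - e%:P * (q * g))%R <= (d+d).+1)%N.
  apply: sizeB; first by apply: sizeM; rewrite ?size_pneg.
  by apply: sizeCM; apply: sizeM.
have rA : rv (d+d) (pneg r * pneg f - e%:P * (f * r)) = pneg r * pneg f - e%:P * (f * r).
  rewrite rvD rvN rvCM ce !rvM ?size_pneg // !(rv_neg_e _ eE) rr -/r.
  by case: he => ->; rewrite ?polyCN ?polyC1; ring.
have rB : rv (d+d) (pneg g * pneg q - e%:P * (q * g)) = pneg g * pneg q - e%:P * (q * g).
  rewrite rvD rvN rvCM ce !rvM ?size_pneg // !(rv_neg_e _ eE) rq -/q.
  by case: he => ->; rewrite ?polyCN ?polyC1; ring.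
have s1 : (Y ^+ 3 * ((pneg r * pneg f - e%:P * (f * r)) * (q * (e%:P * pneg q))))`_N4 =
   ((Y * ((pneg r * pneg f - e%:P * (f * r)) * (g * pneg g)))`_N4)^*.
  rewrite (@refl_ct _ ((d+d) + (d+d))%N _ _ (d.+1 * 3)%N); last by rewrite /N4; lia.
    by rewrite rvM // rA -(rv_neg_e _ eE) -rvM ?size_pneg // /Y exprM.
  by apply: sizeM.
have t1 : (Y ^+ 3 * ((pneg g * pneg q - e%:P * (q * g)) * (r * (e%:P * pneg r))))`_N4 =
   ((Y * ((pneg g * pneg q - e%:P * (q * g)) * (f * pneg f)))`_N4)^*.
  rewrite (@refl_ct _ ((d+d) + (d+d))%N _ _ (d.+1 * 3)%N); last by rewrite /N4; lia.
    by rewrite rvM // rB -(rv_neg_e _ eE) -rvM ?size_pneg // /Y exprM.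
  by apply: sizeM.
rewrite -polyCM !(coefD, coefN, coefCM) !cY2 !cY4 !(coefD, coefN) s1 t1 i1 i2 i3 i4 i5 i6 i7.
rewrite !ReE !(rmorphD, rmorphN, rmorphM) /= !conjCK cs ct rmorph0.
ring.
Qed.
End Main.

Lemma zero_facts (C : numClosedFieldType) :
  [/\ l2sq (lofpoly (0 : {poly C})) = 0, ucoef (0 : {poly C}) 0 = 0,
      vcoef (0 : {poly C}) 0 = 0 & wcoef (0 : {poly C}) 0 = 0].
Proof.
have ip0 : ip 0 (0 : {poly C}) 0 = 0 by rewrite /ip big1 // => i _; rewrite coef0 mul0r.
have R0 : 'Re (0 : C) = 0 by rewrite ReE rmorph0 addr0 mul0r.
have p0 : pneg (0 : {poly C}) = 0 by rewrite /pneg comp_poly0.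
split.
- by rewrite (l2sqE (N := 0)) ?size_poly0 // ip0.
- by rewrite (ucoefE (N := 0)) ?mul0r ?size_poly0 // ip0.
- by rewrite (vcoefE (N := 0)) ?mul0r ?size_poly0 // ip0.
- by rewrite (wcoefE (N := 0)) ?mul0r ?size_poly0 // ip0.
Qed.

Unset Implicit Arguments.
Set Strict Implicit.

Theorem lemma2p3 (C : numClosedFieldType) (l : nat) (f g : {poly C})
  (s t : C) :
  size f = l -> size g = l ->
  (s = 1 \/ s = -1) -> (t = 1 \/ t = -1) ->
  let f1 := step l s f in
  let g1 := step l t g in
  l2sq (lofpoly f1) = 2 * l2sq (lofpoly f) /\
  l2sq (lofpoly g1) = 2 * l2sq (lofpoly g) /\
  ucoef f1 g1 = 2 * ucoef f g + 2 * vcoef f g + 2 * s * t * wcoef f g /\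
  vcoef f1 g1 = 2 * ucoef f g + 2 * vcoef f g - 2 * s * t * wcoef f g /\
  wcoef f1 g1 = 2 * s * t * ucoef f g - 2 * s * t * vcoef f g + 2 * wcoef f g.
Proof.
move=> Hf Hg hs ht; rewrite /=.
case: l Hf Hg => [|d] Hf Hg.
  move/eqP: Hf; rewrite size_poly_eq0 => /eqP ->.
  move/eqP: Hg; rewrite size_poly_eq0 => /eqP ->.
  have st0 : forall s, step 0 s (0 : {poly C}) = 0.
    by move=> s'; rewrite /step pdaggerE rv0 /pneg comp_poly0 mulr0 scaler0 addr0.
  rewrite !st0; case: (zero_facts C) => -> -> -> ->.
  by rewrite !mulr0 !addr0 subr0.
split; first by apply: n_step.
split; first by apply: n_step.
split; first by apply: u_step.
split; first by apply: v_step.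
by apply: w_step.
Qed.
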